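(* Let $\mathcal{S}$ be a square-free staged tree and let $\mathcal{S}'$ be the staged tree obtained from $\mathcal{S}$ by a swap operator $\tau$. Let $\alpha>0$, let $\mathcal{D}=(N_\lambda)_{\lambda\in\Lambda(\mathcal{S})}$ be a complete data sample on $\mathcal{S}$, and let $\mathcal{D}'$ be the sample on $\mathcal{S}'$ with $N'_{\varphi(\lambda)}=N_\lambda$, where $\varphi:\Lambda(\mathcal{S})\to\Lambda(\mathcal{S}')$ is the bijection of root-to-leaf paths induced by $\tau$. Then $\mathrm{BDepu}(\mathcal{S},\mathcal{D};\alpha)=\mathrm{BDepu}(\mathcal{S}',\mathcal{D}';\alpha)$.
   Context: An event tree is a finite directed rooted tree whose edges are directed away from the root; nodes with no outgoing edges are leaves, all other nodes are situations. A staged tree $\mathcal{S}$ is an event tree together with a partition of its situations into stages $u_1,\dots,u_J$ such that all situations in $u_j$ have the same number $r_j$ of outgoing edges, labelled $1,\dots,r_j$ at each situation of $u_j$; the $k$-th edge of every situation in $u_j$ carries the same conditional transition probability $\theta_{jk}$. A staged tree is square-free if no two situations on the same root-to-leaf path lie in the same stage. $\Lambda(\mathcal{S})$ is the set of root-to-leaf paths and, for an edge $e$, $\Lambda(e)$ is the set of root-to-leaf paths containing $e$. Twin and swap: a twin around a stage $u$ is a subtree rooted at a situation $s_0$ with outgoing edges $e_{01},\dots,e_{0r_1}$ to children $s_{01},\dots,s_{0r_1}$, all of which lie in the same stage $u$ (each with $r_2$ outgoing edges $e_{k1},\dots,e_{kr_2}$ to nodes $s_{kt}$, the subleaves of the twin),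 so that all root-to-subleaf paths have exactly two edges. The swap of this twin replaces it by a twin rooted at $s_0'$ (in the place of $s_0$) with $r_2$ outgoing edges to children $s'_1,\dots,s'_{r_2}$, each having $r_1$ outgoing edges, the $k$-th edge of $s'_t$ leading to the node $s_{kt}$ together with the whole part of the tree below $s_{kt}$ unchanged; the new root $s_0'$ takes the role of a situation of stage $u$ (its $t$-th edge carrying the parameter of the $t$-th edge of $u$), and the new children $s'_t$ are placed in the stage of $s_0$ (their $k$-th edge carrying the parameter of the $k$-th edge of $s_0$). This induces a bijection between root-to-leaf paths (the path through $e_{0k},e_{kt}$ corresponds to the path through the $t$-th root edge and the $k$-th edge of $s'_t$). A swap operator between staged trees is a finite composition of such swaps of single twins. A complete data sample $\mathcal{D}$ assigns to each root-to-leaf path $\lambda$ a number $N_\lambda\ge 0$ of units. For stage $u_j$, $n_{jk}$ is the number of units whose path passes through the $k$-th outgoing edge of some situation in $u_j$, $\overline{n}_j=\sum_k n_{jk}$. The BDepu score with imaginary sample size $\alpha>0$ is $$\mathrm{BDepu}(\mathcal{S},\mathcal{D};\alpha)=\prod_{j=1}^{J}\left[\frac{\Gamma(\overline{\alpha}_j)}{\Gamma(\overline{\alpha}_j+\overline{n}_j)}\prod_{k=1}^{r_j}\frac{\Gamma(\alpha_{jk}+n_{jk})}{\Gamma(\alpha_{jk})}\right],\quad \alpha_{jk}=\frac{\alpha}{|\Lambda(\mathcal{S})|}\sum_{m=1}^{h_j}|\Lambda(e^m_{jk})|,\quad \overline{\alpha}_j=\sum_{k=1}^{r_j}\alpha_{jk},$$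 where $h_j$ is the number of situations in $u_j$ and $e^m_{jk}$ is the $k$-th outgoing edge of the $m$-th situation of $u_j$. *)

(* Defs.v *)
From HB Require Import structures.
From mathcomp Require Import all_boot all_order all_algebra.
From mathcomp Require Import all_classical all_reals all_analysis.
Set Implicit Arguments. Unset Strict Implicit. Unset Printing Implicit Defensive.
Import Order.TTheory GRing.Theory Num.Theory.
Local Open Scope ring_scope.

(** An event tree is a finite rooted tree [Leaf | Node j children]; every
   [Node] is a situation and carries the label [j] of its stage; the k-th
   outgoing edge of a situation (0-indexed here) leads to its k-th child.
   A vertex is addressed by the sequence of edge indices from the root;
   a root-to-leaf path is the address of a leaf. *)
Inductive tree : Type := Leaf | Node of nat & seq tree.

Fixpoint paths (t : tree) : seq (seq nat) :=
  match t with
  | Leaf => [:: [::]]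
  | Node _ cs =>
      (fix aux (i : nat) (cs : seq tree) : seq (seq nat) :=
         match cs with
         | [::] => [::]
         | c :: cs' => map (cons i) (paths c) ++ aux i.+1 cs'
         end) 0%N cs
  end.

Fixpoint sits (t : tree) : seq (seq nat) :=
  match t with
  | Leaf => [::]
  | Node _ cs =>
      [::] :: (fix aux (i : nat) (cs : seq tree) : seq (seq nat) :=
         match cs with
         | [::] => [::]
         | c :: cs' => map (cons i) (sits c) ++ aux i.+1 cs'
         end) 0%N cs
  end.

Fixpoint subt (t : tree) (p : seq nat) : tree :=
  match p with
  | [::] => t
  | i :: p' => if t is Node _ cs then subt (nth Leaf cs i) p' else Leaf
  end.

Definition stage_of (t : tree) (p : seq nat) : nat :=
  if subt t p is Node j _ then j else 0%N.
Definition arity (t : tree) (p : seq nat) : nat :=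
  if subt t p is Node _ cs then size cs else 0%N.

Definition staged (t : tree) : Prop :=
  (forall p, p \in sits t -> (0 < arity t p)%N) /\
  (forall p q, p \in sits t -> q \in sits t ->
     stage_of t p = stage_of t q -> arity t p = arity t q).

Definition square_free (t : tree) : Prop :=
  forall p q, p \in sits t -> q \in sits t -> prefix p q -> p != q ->
    stage_of t p != stage_of t q.

(** The swap of the twin [Node a [seq Node u cs | cs <- css]] (root s0 in
    stage a, children s0k in stage u, subleaves s_kt = nth Leaf (css`_k) t):
    the new root is in stage u, with r2 children in stage a, the k-th edge
    of the t-th child leading to s_kt. *)
Definition swap_twin (a u r2 : nat) (css : seq (seq tree)) : tree :=
  Node u [seq Node a [seq nth Leaf cs t | cs <- css] | t <- iota 0 r2].

Inductive swap1 : tree -> tree -> (seq nat -> seq nat) -> Prop :=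
| swap1_here (a u r2 : nat) (css : seq (seq tree)) :
    all (fun cs => size cs == r2) css ->
    swap1 (Node a [seq Node u cs | cs <- css]) (swap_twin a u r2 css)
      (fun lam => if lam is k :: t :: rest then t :: k :: rest else lam)
| swap1_below (a : nat) (cs : seq tree) (i : nat) (t' : tree)
    (phi : seq nat -> seq nat) :
    (i < size cs)%N -> swap1 (nth Leaf cs i) t' phi ->
    swap1 (Node a cs) (Node a (set_nth Leaf cs i t'))
      (fun lam => if lam is j :: rest then
                    (if j == i then j :: phi rest else lam) else lam).

(** Swap operator: finite composition of single swaps (with the composed
    bijection of paths). *)
Inductive swaps : tree -> tree -> (seq nat -> seq nat) -> Prop :=
| swaps_nil (t : tree) : swaps t t id
| swaps_cons (t1 t2 t3 : tree) (f g : seq nat -> seq nat) :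
    swap1 t1 t2 f -> swaps t2 t3 g -> swaps t1 t3 (g \o f).

Definition Gamma_integrand (R : realType) (x t : R) : R :=
  t `^ (x - 1) * expR (- t).

Definition Gamma (R : realType) (x : R) : R :=
  fine (\int[@lebesgue_measure R]_(t in [set t : R | (0 < t)%R])
          (Gamma_integrand x t)%:E)%E.

Definition stages (t : tree) : seq nat :=
  undup [seq stage_of t p | p <- sits t].

Definition r_of (t : tree) (j : nat) : nat :=
  head 0%N [seq arity t p | p <- sits t & stage_of t p == j].

Definition through (p : seq nat) (k : nat) (lam : seq nat) : bool :=
  prefix (rcons p k) lam.

(** n_jk: number of units whose path passes through the k-th edge of some
    situation of stage j. A data sample is D : seq nat -> nat, D lam = N_lam. *)
Definition n_jk (t : tree) (D : seq nat -> nat) (j k : nat) : nat :=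
  \sum_(lam <- paths t |
          has (fun p => (stage_of t p == j) && through p k lam) (sits t))
     D lam.

Definition nbar_j (t : tree) (D : seq nat -> nat) (j : nat) : nat :=
  \sum_(k < r_of t j) n_jk t D j k.

Definition alpha_jk (R : realType) (t : tree) (alpha : R) (j k : nat) : R :=
  alpha / (size (paths t))%:R *
  \sum_(p <- sits t | stage_of t p == j) (count (through p k) (paths t))%:R.

Definition alphabar_j (R : realType) (t : tree) (alpha : R) (j : nat) : R :=
  \sum_(k < r_of t j) alpha_jk t alpha j k.

Definition BDepu (R : realType) (t : tree) (D : seq nat -> nat) (alpha : R)
  : R :=
  \prod_(j <- stages t)
    (Gamma (alphabar_j t alpha j) /
       Gamma (alphabar_j t alpha j + (nbar_j t D j)%:R) *
     \prod_(k < r_of t j)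
       (Gamma (alpha_jk t alpha j k + (n_jk t D j k)%:R) /
          Gamma (alpha_jk t alpha j k))).

(* Main.v *)
Require Import Defs.
From HB Require Import structures.
From mathcomp Require Import all_boot all_order all_algebra.
From mathcomp Require Import all_classical all_reals all_analysis.
Import Order.TTheory GRing.Theory Num.Theory.

Fixpoint paths_aux (i : nat) (cs : seq tree) : seq (seq nat) :=
  match cs with
  | [::] => [::]
  | c :: cs' => map (cons i) (paths c) ++ paths_aux i.+1 cs'
  end.
Fixpoint sits_aux (i : nat) (cs : seq tree) : seq (seq nat) :=
  match cs with
  | [::] => [::]
  | c :: cs' => map (cons i) (sits c) ++ sits_aux i.+1 cs'
  end.

Lemma paths_aux_E n cs : paths_aux n cs =
  flatten [seq map (cons (n + i)) (paths (nth Leaf cs i)) | i <- iota 0 (size cs)].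
Proof.
elim: cs n => [|c cs IH] n //=.
rewrite IH addn0 (iotaDl 1 0) -map_comp; congr (_ ++ flatten _).
by apply: eq_map => i /=; rewrite addnS addSn.
Qed.

Lemma sits_aux_E n cs : sits_aux n cs =
  flatten [seq map (cons (n + i)) (sits (nth Leaf cs i)) | i <- iota 0 (size cs)].
Proof.
elim: cs n => [|c cs IH] n //=.
rewrite IH addn0 (iotaDl 1 0) -map_comp; congr (_ ++ flatten _).
by apply: eq_map => i /=; rewrite addnS addSn.
Qed.

Lemma paths_node a cs : paths (Node a cs) =
  flatten [seq map (cons i) (paths (nth Leaf cs i)) | i <- iota 0 (size cs)].
Proof. by rewrite -(paths_aux_E 0). Qed.

Lemma sits_node a cs : sits (Node a cs) = [::] ::
  flatten [seq map (cons i) (sits (nth Leaf cs i)) | i <- iota 0 (size cs)].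
Proof. by rewrite -(sits_aux_E 0). Qed.

Fixpoint lab (t : tree) (lam : seq nat) : seq (nat * nat) :=
  match lam with
  | [::] => [::]
  | i :: rest => if t is Node a cs then (a, i) :: lab (nth Leaf cs i) rest else [::]
  end.

Lemma mem_paths_node a cs lam : (lam \in paths (Node a cs)) =
  if lam is i :: rest then (i < size cs) && (rest \in paths (nth Leaf cs i)) else false.
Proof.
rewrite paths_node; apply/flatten_mapP/idP.
  case=> i; rewrite mem_iota add0n => /andP[_ Hi] /mapP[r Hr ->].
  by rewrite Hi.
case: lam => [|i rest] // /andP[Hi Hr]; exists i; first by rewrite mem_iota.
by apply/map_f.
Qed.

Lemma key j k lam t : lam \in paths t ->
  \sum_(p <- sits t) ((stage_of t p == j) && through p k lam) = count_mem (j, k) (lab t lam).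
Proof.
elim: lam t => [|i rest IH] t.
  move=> _ /=; rewrite big1 // => p _.
  by rewrite /through; case: p => [|? ?]; rewrite andbF.
case: t => [|a cs]; first by rewrite /= inE.
rewrite mem_paths_node => /andP[Hi Hr].
rewrite sits_node big_cons big_flatten /= big_map.
rewrite (bigD1_seq i) ?mem_iota ?iota_uniq //= (big_map (cons i)).
rewrite [X in _ + (_ + X)]big1_seq ?addn0; last first.
  move=> j' /andP[Hj' _] /=; rewrite (big_map (cons j')) big1 // => p _.
  by rewrite /through /stage_of /= (negbTE Hj') !andbF.
rewrite -IH //; congr (_ + _).
  rewrite /stage_of /through /= xpair_eqE (eq_sym k).
  by case: rest {IH Hr} => [|? ?]; rewrite /= ?andbT.
by apply: eq_bigr => p _; rewrite /stage_of /through /= eqxx.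
Qed.

Lemma count_sumE (T : Type) (a : pred T) s : count a s = \sum_(x <- s) a x.
Proof. by rewrite -sumn_count sumnE big_map. Qed.

Lemma alpha_num t j k :
  \sum_(p <- sits t | stage_of t p == j) count (through p k) (paths t) =
  \sum_(lam <- paths t) count_mem (j, k) (lab t lam).
Proof.
rewrite (eq_bigr (fun p => \sum_(lam <- paths t) through p k lam)); last by move=> p _; rewrite count_sumE.
rewrite exchange_big /= big_seq [RHS]big_seq; apply: eq_bigr => lam Hl.
by rewrite -key // big_mkcond /=; apply: eq_bigr => p _; case: (stage_of t p == j).
Qed.

Lemma has_key t j k lam : lam \in paths t ->
  has (fun p => (stage_of t p == j) && through p k lam) (sits t) = ((j, k) \in lab t lam).
Proof.
by move=> Hl; rewrite has_count count_sumE /= key // -has_pred1 has_count.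
Qed.

Lemma n_jkE t D j k : n_jk t D j k =
  \sum_(lam <- paths t | (j, k) \in lab t lam) D lam.
Proof.
rewrite /n_jk big_seq_cond [RHS]big_seq_cond; apply: eq_bigl => lam.
by case Hl: (lam \in paths t) => //=; rewrite has_key.
Qed.

Lemma count_paths_node (a : pred (seq nat)) x cs :
  count a (paths (Node x cs)) =
  \sum_(i <- iota 0 (size cs)) count (fun l => a (i :: l)) (paths (nth Leaf cs i)).
Proof.
rewrite paths_node count_flatten sumnE !big_map; apply: eq_bigr => i _.
by rewrite count_map.
Qed.

Lemma swap1_lab t t' f : swap1 t t' f ->
  forall lam, lam \in paths t -> perm_eq (lab t' (f lam)) (lab t lam).
Proof.
elim=> {t t' f} [a u r2 css Hall | a cs i t' phi Hi Hs IH] lam.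
  rewrite mem_paths_node; case: lam => [|k rest] //; rewrite size_map.
  move=> /andP[Hk]; rewrite (nth_map [::]) // mem_paths_node.
  have Hsz : size (nth [::] css k) = r2 by apply/eqP; exact: (all_nthP [::] Hall k Hk).
  case: rest => [|t rest] //; rewrite Hsz => /andP[Ht _].
  rewrite /swap_twin /= (nth_map 0) ?size_iota // nth_iota // add0n.
  rewrite (nth_map [::]) //.
  rewrite (nth_map [::]) // /=. apply/permP => p /=; by rewrite addnCA.
rewrite mem_paths_node; case: lam => [|j rest] // /andP[Hj Hr] /=.
move: Hr; case: (eqVneq j i) => [Eji|Hji] Hr /=.
  by subst j; rewrite nth_set_nth /= eqxx perm_cons IH.
by rewrite nth_set_nth /= (negbTE Hji).
Qed.

Lemma swap1_paths t t' f : swap1 t t' f -> perm_eq (paths t') (map f (paths t)).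
Proof.
elim=> {t t' f} [a u r2 css Hall | a cs i t' phi Hi Hs IH]; apply/permP => P;
  rewrite count_map.
  rewrite /swap_twin [LHS]count_paths_node [RHS]count_paths_node !size_map size_iota.
  rewrite (eq_big_seq (fun t => \sum_(k <- iota 0 (size css))
     count (fun l => P (t :: k :: l)) (paths (nth Leaf (nth [::] css k) t)))); last first.
    move=> t; rewrite mem_iota => /andP[_ Ht].
    rewrite (nth_map 0) ?size_iota // nth_iota // count_paths_node size_map.
    by apply: eq_big_seq => k; rewrite mem_iota => /andP[_ Hk]; rewrite (nth_map [::]).
  rewrite [RHS](eq_big_seq (fun k => \sum_(t <- iota 0 r2)
     count (fun l => P (t :: k :: l)) (paths (nth Leaf (nth [::] css k) t)))); last first.
    move=> k; rewrite mem_iota => /andP[_ Hk].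
    have Hsz : size (nth [::] css k) = r2 by apply/eqP; exact: (all_nthP [::] Hall k Hk).
    by rewrite (nth_map [::]) // count_paths_node Hsz.
  by rewrite exchange_big.
rewrite !count_paths_node size_set_nth (maxn_idPr Hi).
apply: eq_big_seq => j; rewrite mem_iota => /andP[_ Hj] /=.
rewrite nth_set_nth /=; case: (eqVneq j i) => [->|Hji].
  rewrite ((permP IH) (fun l => P (i :: l))) count_map.
  by apply: eq_count => l /=; rewrite ?eqxx.
by [].
Qed.

Definition SA (t : tree) : seq (nat * nat) :=
  [seq (stage_of t p, arity t p) | p <- sits t].

Lemma SA_node a cs : SA (Node a cs) =
  (a, size cs) :: flatten [seq SA (nth Leaf cs i) | i <- iota 0 (size cs)].
Proof.
rewrite /SA sits_node /= map_flatten -map_comp; congr (_ :: flatten _).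
by apply: eq_map => i /=; rewrite -map_comp.
Qed.

Lemma mem_SA_node a cs x : (x \in SA (Node a cs)) =
  (x == (a, size cs)) || has (fun i => x \in SA (nth Leaf cs i)) (iota 0 (size cs)).
Proof.
rewrite SA_node inE; congr orb; apply/flatten_mapP/hasP => [[i Hi Hx]|[i Hi Hx]];
  by exists i.
Qed.

Definition sgood (s : seq (nat * nat)) : Prop :=
  (forall x, x \in s -> 0 < x.2) /\
  (forall x y, x \in s -> y \in s -> x.1 = y.1 -> x.2 = y.2).

Lemma staged_sgood t : staged t <-> sgood (SA t).
Proof.
split=> [[H1 H2]|[H1 H2]]; split.
- by move=> x /mapP[p Hp ->]; exact: H1.
- by move=> x y /mapP[p Hp ->] /mapP[q Hq ->] /=; exact: H2.
- by move=> p Hp; exact: (H1 _ (map_f (fun p => (stage_of t p, arity t p)) Hp)).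
- move=> p q Hp Hq E.
  exact: (H2 _ _ (map_f (fun p => (stage_of t p, arity t p)) Hp)
                 (map_f (fun p => (stage_of t p, arity t p)) Hq) E).
Qed.

Lemma sgood_mem s1 s2 : s1 =i s2 -> sgood s1 -> sgood s2.
Proof.
move=> E [H1 H2]; split=> [x|x y]; rewrite -!E; [exact: H1 | exact: H2].
Qed.

Lemma r_ofE t j : r_of t j = head 0 [seq x.2 | x <- SA t & x.1 == j].
Proof. by rewrite /r_of /SA filter_map -map_comp. Qed.

Lemma stagesE t : stages t = undup [seq x.1 | x <- SA t].
Proof. by rewrite /stages /SA -map_comp. Qed.

Lemma head_mem s1 s2 j : s1 =i s2 -> sgood s1 ->
  head 0 [seq x.2 | x <- s1 & x.1 == j] = head 0 [seq x.2 | x <- s2 & x.1 == j].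
Proof.
move=> E [_ H2].
have G : forall s, (forall x, x \in s -> x \in s1) ->
    head 0 [seq x.2 | x <- s & x.1 == j] = 0 /\ ~~ has (fun x => x.1 == j) s \/
    exists x, head 0 [seq x.2 | x <- s & x.1 == j] = x.2 /\ x \in s1 /\ x.1 = j.
  move=> s Hs; case Hh: (has (fun x => x.1 == j) s).
    right; elim: s Hs Hh => [|y s IH] Hs //= Hh.
    case: eqP => [Ey|Ny] /=; first by exists y; split=> //; split=> //; apply: Hs; rewrite inE eqxx.
    apply: IH => //; last by move: Hh => /=; case: eqP.
    by move=> x Hx; apply: Hs; rewrite inE Hx orbT.
  left; split=> //; move/negbT: Hh; rewrite -all_predC.
  by elim: s {Hs} => [|y s IH] //= /andP[/negbTE -> /IH].
have E2 : forall x, x \in s2 -> x \in s1 by move=> x; rewrite E.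
have [[A1 B1]|[x1 [A1 [B1 C1]]]] := G s1 (fun x h => h);
  have [[A2 B2]|[x2 [A2 [B2 C2]]]] := G s2 E2; rewrite ?A1 ?A2 //.
- exfalso; move/negP: B1; apply; apply/hasP; exists x2; [by [] | by rewrite /= C2].
- exfalso; move/negP: B2; apply; apply/hasP; exists x1; [by rewrite -E | by rewrite /= C1].
- by apply: H2 => //; rewrite C1 C2.
Qed.

Lemma has_or_const (b : bool) (P : pred nat) n : 0 < n ->
  has (fun k => b || P k) (iota 0 n) = b || has P (iota 0 n).
Proof. by case: n => // n _; case: b. Qed.

Lemma has_comm (P : nat -> nat -> bool) n m :
  has (fun k => has (P k) (iota 0 m)) (iota 0 n) =
  has (fun t => has (P^~ t) (iota 0 n)) (iota 0 m).
Proof.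
apply/hasP/hasP => [[k Hk]|[t Ht]].
  by move=> /hasP[t Ht H]; exists t => //; apply/hasP; exists k.
by move=> /hasP[k Hk H]; exists k => //; apply/hasP; exists t.
Qed.

Lemma swap1_SA t t' f : swap1 t t' f ->
  (forall x, x \in SA t -> 0 < x.2) -> SA t =i SA t'.
Proof.
elim=> {t t' f} [a u r2 css Hall | a cs i t' phi Hi Hs IH] Hpos x.
  have Hsz : forall k, k < size css -> size (nth [::] css k) = r2.
    by move=> k Hk; apply/eqP; exact: (all_nthP [::] Hall k Hk).
  have Hn : 0 < size css.
    by have := Hpos (a, size css); rewrite mem_SA_node size_map eqxx /=; apply.
  have Hr2 : 0 < r2.
    have := Hpos (u, r2); rewrite mem_SA_node /=; apply; apply/orP; right.
    apply/hasP; exists 0; first by rewrite size_map mem_iota.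
    by rewrite (nth_map [::]) // mem_SA_node Hsz // eqxx.
  rewrite /swap_twin !mem_SA_node !size_map size_iota.
  rewrite (eq_in_has (a2 := fun k => (x == (u, r2)) ||
      has (fun t => x \in SA (nth Leaf (nth [::] css k) t)) (iota 0 r2))); last first.
    move=> k; rewrite mem_iota => /andP[_ Hk].
    by rewrite /= (nth_map [::]) // mem_SA_node Hsz.
  rewrite [in RHS](eq_in_has (a2 := fun t => (x == (a, size css)) ||
      has (fun k => x \in SA (nth Leaf (nth [::] css k) t)) (iota 0 (size css)))); last first.
    move=> t; rewrite mem_iota => /andP[_ Ht].
    rewrite /= (nth_map 0) ?size_iota // nth_iota // mem_SA_node size_map.
    congr orb; apply: eq_in_has => k; rewrite mem_iota => /andP[_ Hk].
    by rewrite /= (nth_map [::]).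
  rewrite !has_or_const // orbCA; congr (_ || (_ || _)).
  by rewrite (has_comm (fun k t => x \in SA (nth Leaf (nth [::] css k) t))).
have Hpos' : forall x, x \in SA (nth Leaf cs i) -> 0 < x.2.
  move=> y Hy; apply: Hpos; rewrite mem_SA_node; apply/orP; right.
  by apply/hasP; exists i => //; rewrite mem_iota.
rewrite !mem_SA_node size_set_nth (maxn_idPr Hi); congr orb.
apply: eq_in_has => j _ /=; rewrite nth_set_nth /=.
by case: (eqVneq j i) => [->|//]; rewrite IH.
Qed.

Local Open Scope ring_scope.

Lemma swap1_main (R : realType) t t' f (alpha : R) D D' :
  swap1 t t' f -> staged t ->
  (forall lam, lam \in paths t -> D' (f lam) = D lam) ->
  BDepu t D alpha = BDepu t' D' alpha /\ staged t'.
Proof.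
move=> Hs Hst HD.
have Hg := (staged_sgood t).1 Hst.
have Hmem : SA t =i SA t' := swap1_SA _ _ _ Hs Hg.1.
have Hst' : staged t' by apply/staged_sgood; exact: sgood_mem Hmem Hg.
split=> //.
have Hp := swap1_paths _ _ _ Hs; have Hl := swap1_lab _ _ _ Hs.
have Hr : r_of t' = r_of t.
  by apply/funext => j; rewrite !r_ofE (head_mem _ _ j Hmem Hg).
have Hsize : size (paths t') = size (paths t) by rewrite (perm_size Hp) size_map.
have Ha : alpha_jk t' alpha = alpha_jk t alpha.
  apply/funext => j; apply/funext => k; rewrite /alpha_jk Hsize -!natr_sum !alpha_num.
  congr (_ * _%:R); rewrite (perm_big _ Hp) big_map big_seq [RHS]big_seq.
  by apply: eq_bigr => lam Hlam; exact: ((permP (Hl lam Hlam)) (pred1 (j, k))).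
have Hn : n_jk t' D' = n_jk t D.
  apply/funext => j; apply/funext => k.
  rewrite !n_jkE (perm_big _ Hp) big_map big_seq_cond [RHS]big_seq_cond.
  apply: eq_big => lam.
    by case Hlam: (lam \in paths t) => //=; rewrite (perm_mem (Hl lam Hlam)).
  by move=> /andP[Hlam _]; exact: HD.
rewrite /BDepu /alphabar_j /nbar_j Hr Ha Hn.
apply: perm_big; rewrite !stagesE; apply: uniq_perm; rewrite ?undup_uniq // => j.
by rewrite !mem_undup; apply: eq_mem_map.
Qed.

Lemma BDepu_ext (R : realType) t (alpha : R) D D' :
  (forall lam, lam \in paths t -> D lam = D' lam) -> BDepu t D alpha = BDepu t D' alpha.
Proof.
move=> HD; have Hn : n_jk t D = n_jk t D'.
  apply/funext => j; apply/funext => k.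
  rewrite !n_jkE big_seq_cond [RHS]big_seq_cond.
  by apply: eq_bigr => lam /andP[H _]; exact: HD.
by rewrite /BDepu /nbar_j Hn.
Qed.

Lemma swaps_main (R : realType) t t' f (alpha : R) :
  swaps t t' f -> forall D D', staged t ->
  (forall lam, lam \in paths t -> D' (f lam) = D lam) ->
  BDepu t D alpha = BDepu t' D' alpha.
Proof.
elim=> {t t' f} [t | t1 t2 t3 f g Hs1 Hs2 IH] D D' Hst HD.
  by apply: BDepu_ext => lam H; rewrite -HD.
have [E Hst2] := swap1_main _ _ _ _ alpha D (fun x => D' (g x)) Hs1 Hst HD.
by rewrite E; apply: IH.
Qed.

Theorem lemma2 (R : realType) (S S' : tree) (phi : seq nat -> seq nat)
  (alpha : R) (D D' : seq nat -> nat) :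
  staged S -> square_free S -> swaps S S' phi -> 0 < alpha ->
  (forall lam, lam \in paths S -> D' (phi lam) = D lam) ->
  BDepu S D alpha = BDepu S' D' alpha.
Proof.
by move=> Hst _ Hs _ HD; exact: (swaps_main _ _ _ _ alpha Hs D D' Hst HD).
Qed.
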